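(* Let $(R,\mathfrak{m})$ be a commutative Artinian local ring with identity, $\mathfrak{m}\neq0$ and $\mathfrak{m}^2=0$, and let $n\ge7$ be an integer. If $|R|>4$ (including $R$ infinite), then $L(x^n)=\{3,4,5,\dots,n-2\}\cup\{n\}$ if $n$ is odd, and $L(x^n)=\{2,3,4,\dots,n-2\}\cup\{n\}$ if $n$ is even. If $|R|=4$, then $L(x^n)=\{3,4,5,\dots,n-4\}\cup\{n-2,n\}$ if $n$ is odd, and $L(x^n)=\{2,3,4,\dots,n-4\}\cup\{n-2,n\}$ if $n$ is even.
   Context: A nonunit polynomial in $R[x]$ is irreducible if in any factorization into two polynomials one factor is a unit of $R[x]$ (a polynomial $a_0+\dots+a_dx^d$ is a unit iff $a_0$ is a unit of $R$ and $a_i\in\mathfrak{m}$ for $i>0$). A positive integer $k$ is a length of $f\in R[x]$ if $f$ is a product of $k$ irreducible polynomials of $R[x]$; $L(f)$ denotes the set of lengths of $f$. *)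

(* Defs.v *)
From HB Require Import structures.
From mathcomp Require Import all_boot all_order all_algebra.
Set Implicit Arguments. Unset Strict Implicit. Unset Printing Implicit Defensive.
Import Order.TTheory GRing.Theory Num.Theory.
Local Open Scope ring_scope.

Definition is_ideal (R : comUnitRingType) (I : R -> Prop) : Prop :=
  I 0 /\ (forall x y, I x -> I y -> I (x + y)) /\ (forall r x, I x -> I (r * x)).

Definition artinian (R : comUnitRingType) : Prop :=
  forall I : nat -> R -> Prop,
    (forall k, is_ideal (I k)) ->
    (forall k x, I k.+1 x -> I k x) ->
    exists N, forall k, (N <= k)%N -> forall x, I k x <-> I N x.

(* Local ring: the nonunits form an ideal (which is then the unique maximal
   ideal m). Closure under multiplication by R is automatic. *)
Definition local_ring (R : comUnitRingType) : Prop :=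
  forall x y : R, x \isn't a GRing.unit -> y \isn't a GRing.unit ->
    (x + y) \isn't a GRing.unit.

Definition in_max (R : comUnitRingType) (x : R) : Prop := x \isn't a GRing.unit.

Definition poly_unit (R : comUnitRingType) (p : {poly R}) : Prop :=
  exists q : {poly R}, p * q = 1.

Definition poly_irr (R : comUnitRingType) (p : {poly R}) : Prop :=
  ~ poly_unit p /\
  forall f g : {poly R}, p = f * g -> poly_unit f \/ poly_unit g.

Definition is_length (R : comUnitRingType) (f : {poly R}) (k : nat) : Prop :=
  (0 < k)%N /\
  exists s : seq {poly R},
    size s = k /\ (forall g, g \in s -> poly_irr g) /\ \prod_(g <- s) g = f.

Definition card_eq4 (T : eqType) : Prop :=
  exists s : seq T, uniq s /\ size s = 4%N /\ forall x : T, x \in s.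

Definition card_gt4 (T : eqType) : Prop :=
  exists s : seq T, uniq s /\ size s = 5%N.

(* Main.v *)
Require Import Defs.
From HB Require Import structures.
From mathcomp Require Import all_boot all_order all_algebra zify ring.
From Stdlib Require Classical_Prop.
Import Order.TTheory GRing.Theory Num.Theory.
Local Open Scope ring_scope.
Set Implicit Arguments. Unset Strict Implicit.

Section Basic.
Variable R : comUnitRingType.
Hypothesis hloc : local_ring R.
Hypothesis hm2 : forall a b : R, in_max a -> in_max b -> a * b = 0.

Lemma max0 : in_max (0 : R).
Proof. by rewrite /in_max unitr0. Qed.

Lemma maxD (x y : R) : in_max x -> in_max y -> in_max (x + y).
Proof. exact: hloc. Qed.

Lemma maxN (x : R) : in_max x -> in_max (- x).
Proof. by rewrite /in_max unitrN. Qed.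

Lemma maxB (x y : R) : in_max x -> in_max y -> in_max (x - y).
Proof. by move=> hx hy; apply: maxD => //; apply: maxN. Qed.

Lemma maxMl (r x : R) : in_max x -> in_max (r * x).
Proof. by rewrite /in_max unitrM => /negbTE ->; rewrite andbF. Qed.

Lemma maxMr (r x : R) : in_max x -> in_max (x * r).
Proof. by rewrite mulrC; apply: maxMl. Qed.

Lemma unitD (u x : R) : u \is a GRing.unit -> in_max x -> (u + x) \is a GRing.unit.
Proof.
move=> hu hx; apply/negPn/negP => h.
have : in_max ((u + x) - x) by apply: maxB.
by rewrite addrK /in_max hu.
Qed.

Lemma max_unit (x : R) : in_max x -> x \is a GRing.unit -> False.
Proof. by rewrite /in_max => /negP. Qed.

Lemma max_sum (I : Type) (r : seq I) (P : pred I) (F : I -> R) :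
  (forall i, P i -> in_max (F i)) -> in_max (\sum_(i <- r | P i) F i).
Proof. move=> h; apply: big_ind; [exact: max0 | exact: maxD | exact: h]. Qed.

Definition mp (p : {poly R}) := forall i, in_max p`_i.

Lemma mp0 : mp 0. Proof. by move=> i; rewrite coef0; apply: max0. Qed.
Lemma mpD p q : mp p -> mp q -> mp (p + q).
Proof. by move=> hp hq i; rewrite coefD; apply: maxD. Qed.
Lemma mpN p : mp p -> mp (- p).
Proof. by move=> hp i; rewrite coefN; apply: maxN. Qed.
Lemma mpB p q : mp p -> mp q -> mp (p - q).
Proof. by move=> hp hq; apply: mpD => //; apply: mpN. Qed.
Lemma mpC c : in_max c -> mp c%:P.
Proof. by move=> hc i; rewrite coefC; case: eqP => _ //; apply: max0. Qed.
Lemma mpZ c p : in_max c -> mp (c *: p).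
Proof. by move=> hc i; rewrite coefZ; apply: maxMr. Qed.
Lemma mpMl q p : mp p -> mp (q * p).
Proof.
by move=> hp i; rewrite coefM; apply: max_sum => j _; apply: maxMl.
Qed.
Lemma mp_mul0 p q : mp p -> mp q -> p * q = 0.
Proof.
move=> hp hq; apply/polyP => i; rewrite coefM coef0.
by apply: big1 => j _; apply: hm2.
Qed.

Definition goodat (a : nat) (f : {poly R}) :=
  f`_a \is a GRing.unit /\ forall i, i != a -> in_max f`_i.

Lemma unit_coef (f g : {poly R}) a b :
  f`_a \is a GRing.unit -> g`_b \is a GRing.unit ->
  (forall i, (i <= a + b)%N -> i != a -> in_max f`_i \/ in_max g`_(a + b - i)) ->
  (f * g)`_(a + b) \is a GRing.unit.
Proof.
move=> hfa hgb h; rewrite coefM.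
have ha : (a < (a + b).+1)%N by rewrite ltnS leq_addr.
rewrite (bigD1 (Ordinal ha)) //= addKn.
apply: unitD; first by rewrite unitrM hfa hgb.
apply: max_sum => i /= hi.
have hia : (i : nat) != a by apply: contra hi => /eqP hi; apply/eqP/val_inj.
have := ltn_ord i; rewrite ltnS => hi2.
by case: (h _ hi2 hia) => hh; [apply: maxMr | apply: maxMl].
Qed.


Definition ordf (f : {poly R}) := find (fun c : R => c \is a GRing.unit) f.

Lemma nonunit_all (f : {poly R}) :
  ~~ has (fun c : R => c \is a GRing.unit) f -> mp f.
Proof.
move/hasPn => H i; case: (ltnP i (size f)) => hi.
  by apply: H; apply: mem_nth.
by rewrite nth_default //; apply: max0.
Qed.

Lemma ordf_unit (f : {poly R}) :
  has (fun c : R => c \is a GRing.unit) f -> f`_(ordf f) \is a GRing.unit.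
Proof. by move=> h; have := nth_find 0 h. Qed.

Lemma ordf_min (f : {poly R}) i : (i < ordf f)%N -> in_max f`_i.
Proof. by move=> h; rewrite /in_max (before_find 0 h). Qed.

Lemma unit_size (f : {poly R}) i : f`_i \is a GRing.unit -> (i < size f)%N.
Proof.
move=> h; case: (ltnP i (size f)) => // hi.
by move: h; rewrite nth_default // unitr0.
Qed.

Lemma good_mul (f g h : {poly R}) A :
  f * g = h -> goodat A h ->
  exists a b, [/\ goodat a f, goodat b g & (a + b)%N = A].
Proof.
move=> fgh [hA hO].
have Hf : has (fun c : R => c \is a GRing.unit) f.
  apply/negPn/negP => /nonunit_all hf.
  have := mpMl g hf A; rewrite mulrC fgh => hm; exact: max_unit hm hA.
have Hg : has (fun c : R => c \is a GRing.unit) g.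
  apply/negPn/negP => /nonunit_all hg.
  have := mpMl f hg A; rewrite fgh => hm; exact: max_unit hm hA.
have exf : exists i, (fun i => f`_i \is a GRing.unit) i by exists (ordf f); exact: ordf_unit.
have exg : exists i, (fun i => g`_i \is a GRing.unit) i by exists (ordf g); exact: ordf_unit.
have ubf : forall i, (fun i => f`_i \is a GRing.unit) i -> (i <= size f)%N.
  by move=> i /unit_size /ltnW.
have ubg : forall i, (fun i => g`_i \is a GRing.unit) i -> (i <= size g)%N.
  by move=> i /unit_size /ltnW.
case: (ex_maxnP exf ubf) => a1 /= ha1 Ma1.
case: (ex_maxnP exg ubg) => b1 /= hb1 Mb1.
set a0 := ordf f; set b0 := ordf g.
have ha0 : f`_a0 \is a GRing.unit by apply: ordf_unit.
have hb0 : g`_b0 \is a GRing.unit by apply: ordf_unit.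
have E0 : (a0 + b0)%N = A.
  apply/eqP; apply/negP => /negP hne.
  have := hO _ hne; rewrite -fgh => hm; apply: max_unit hm _.
  apply: unit_coef => // i hi hia.
  case: (ltnP i a0) => hi2; first by left; apply: ordf_min.
  right; apply: ordf_min; rewrite -/b0; lia.
have E1 : (a1 + b1)%N = A.
  apply/eqP; apply/negP => /negP hne.
  have := hO _ hne; rewrite -fgh => hm; apply: max_unit hm _.
  apply: unit_coef => // i hi hia.
  case: (ltnP i a1) => hi2.
    right; apply/negP => /Mb1; lia.
  left; apply/negP => /Ma1; lia.
have la : (a0 <= a1)%N by apply: Ma1.
have lb : (b0 <= b1)%N by apply: Mb1.
have ea : a0 = a1 by lia.
have eb : b0 = b1 by lia.
exists a0, b0; split => //.
  split => // i hi; apply/negP => hu.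
  case: (ltnP i a0) => h1; first by move: (ordf_min h1); rewrite /in_max hu.
  have := Ma1 _ hu; move: hi => /eqP; lia.
split => // i hi; apply/negP => hu.
case: (ltnP i b0) => h1; first by move: (ordf_min h1); rewrite /in_max hu.
have := Mb1 _ hu; move: hi => /eqP; lia.
Qed.


Lemma goodat_ordf a (f : {poly R}) : goodat a f -> ordf f = a.
Proof.
move=> [ha hO].
have Hf : has (fun c : R => c \is a GRing.unit) f.
  by apply/hasP; exists f`_a => //; apply: mem_nth; apply: unit_size.
case: (ltngtP (ordf f) a) => // h.
  have := hO (ordf f) (negbT (ltn_eqF h)); rewrite /in_max (ordf_unit Hf) //.
by have := ordf_min h; rewrite /in_max ha.
Qed.

Lemma good0_unit (f : {poly R}) : goodat 0 f -> Defs.poly_unit f.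
Proof.
move=> [h0 hO].
set c := f`_0; set p := f - c%:P.
have mpp : mp p.
  move=> i; rewrite /p coefB coefC; case: eqP => [->|/eqP hi].
    by rewrite subrr; apply: max0.
  by rewrite subr0; apply: hO.
set u := c^-1%:P.
have cu : c%:P * u = 1 by rewrite -polyCM mulrV.
have fE : f = c%:P + p by rewrite /p addrC subrK.
exists (u - u * u * p).
have E : (c%:P + p) * (u - u * u * p) = 1 + (c%:P * u - 1) * (1 - u * p) - u * u * (p * p) by ring.
by rewrite fE E cu subrr mul0r addr0 (mp_mul0 mpp mpp) mulr0 subr0.
Qed.

Lemma goodat1 : goodat 0 (1 : {poly R}).
Proof.
split; first by rewrite coef1 unitr1.
by move=> i hi; rewrite coef1 (negbTE hi); apply: max0.
Qed.

Lemma good_nonunit a (f : {poly R}) : goodat a f -> (0 < a)%N -> ~ Defs.poly_unit f.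
Proof.
move=> ha apos [q fq].
have [a' [b' [ha' hb' e]]] := good_mul fq goodat1.
have := goodat_ordf ha; rewrite (goodat_ordf ha') => ea.
by move: e apos; rewrite ea; lia.
Qed.

Lemma irr_good a (f : {poly R}) : goodat a f -> (0 < a)%N -> (a = 1%N \/ f`_0 != 0) -> poly_irr f.
Proof.
move=> ha apos h1; split; first exact: good_nonunit ha apos.
move=> g1 g2 e.
have [b [c [hb hc ebc]]] := good_mul (esym e) ha.
case: b hb ebc => [|b] hb ebc; first by left; apply: good0_unit.
case: c hc ebc => [|c] hc ebc; first by right; apply: good0_unit.
exfalso; case: h1 => [h1|]; first by move: ebc; rewrite h1; lia.
rewrite e coef0M; case: hb => _ hb; case: hc => _ hc.
by rewrite hm2 ?eqxx //; [apply: hb | apply: hc].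
Qed.

Lemma goodX : goodat 1 ('X : {poly R}).
Proof.
split; first by rewrite coefX unitr1.
by move=> i hi; rewrite coefX (negbTE hi); apply: max0.
Qed.

Lemma irr_pos a (f : {poly R}) : poly_irr f -> goodat a f -> (0 < a)%N.
Proof.
case: a => // [[hnu _]] h; exfalso; apply: hnu; exact: good0_unit.
Qed.

Lemma irr_f0 a (f : {poly R}) : poly_irr f -> goodat a f -> (2 <= a)%N -> f`_0 != 0.
Proof.
move=> [hnu hirr] ha a2; apply/negP => /eqP f0.
have E : f = drop_poly 1 f * 'X.
  rewrite -{1}(poly_take_drop 1 f) expr1.
  have -> : take_poly 1 f = 0.
    by apply/polyP => i; rewrite coef_take_poly coef0; case: i => //=.
  by rewrite add0r.
have gd : goodat a.-1 (drop_poly 1 f).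
  case: ha => hu hO; split; first by rewrite coef_drop_poly addn1 prednK //; lia.
  move=> i hi; rewrite coef_drop_poly; apply: hO; move: hi; apply: contra => /eqP; lia.
case: (hirr _ _ E).
  by apply: (good_nonunit gd); lia.
by apply: (good_nonunit goodX).
Qed.


Lemma mp_rest a (g : {poly R}) : goodat a g -> mp (g - (g`_a)%:P * 'X^a).
Proof.
move=> [hu hO] i; rewrite coefB coefCM coefXn.
case: (eqVneq i a) => [->|hi]; first by rewrite mulr1 subrr; apply: max0.
by rewrite mulr0 subr0; apply: hO.
Qed.

Lemma mul_decomp a B (g P : {poly R}) j :
  goodat a g -> goodat B P ->
  (g * P)`_j =
    (if j == (a + B)%N then g`_a * P`_B else 0)
  + (if (j < a)%N then 0 else g`_a * (P - (P`_B)%:P * 'X^B)`_(j - a))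
  + (if (j < B)%N then 0 else P`_B * (g - (g`_a)%:P * 'X^a)`_(j - B)).
Proof.
move=> hg hP.
set p := g - _; set Q := P - _.
have mpp : mp p by apply: mp_rest.
have mpQ : mp Q by apply: mp_rest.
have E : g * P = (g`_a * P`_B)%:P * 'X^(a + B) + (g`_a)%:P * ('X^a * Q)
                 + (P`_B)%:P * ('X^B * p) + p * Q.
  rewrite /p /Q polyCM exprD; ring.
rewrite E (mp_mul0 mpp mpQ) addr0 ![in LHS]coefD ![in LHS]coefCM ![in LHS]coefXnM [in LHS]coefXn.
congr (_ + _ + _).
  by case: eqP => _; rewrite ?mulr1 ?mulr0.
  by case: ifP => _; rewrite ?mulr0.
by case: ifP => _; rewrite ?mulr0.
Qed.


Lemma coef_rest a (g : {poly R}) i :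
  (g - (g`_a)%:P * 'X^a)`_i = if i == a then 0 else g`_i.
Proof.
rewrite coefB coefCM coefXn; case: eqVneq => [->|_]; first by rewrite mulr1 subrr.
by rewrite mulr0 subr0.
Qed.

Lemma prod_good (s : seq {poly R}) h A :
  \prod_(f <- s) f = h -> goodat A h ->
  (forall f, f \in s -> goodat (ordf f) f) /\ (\sum_(f <- s) ordf f)%N = A.
Proof.
elim: s h A => [|g t IH] h A.
  rewrite !big_nil => <- hA; split => //.
  by have := goodat_ordf goodat1; rewrite (goodat_ordf hA).
rewrite big_cons => e hA.
have [a [b [ga gb eab]]] := good_mul e hA.
have [IH1 IH2] := IH _ _ erefl gb.
split.
  move=> f; rewrite inE => /orP [/eqP ->|hf]; last by apply: IH1.
  by rewrite (goodat_ordf ga).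
by rewrite big_cons IH2 (goodat_ordf ga).
Qed.

Lemma prod_coef K (s : seq {poly R}) :
  (forall f, f \in s -> goodat (ordf f) f /\ (ordf f <= K)%N) ->
  goodat (\sum_(f <- s) ordf f)%N (\prod_(f <- s) f) /\
  forall j, (j + K < \sum_(f <- s) ordf f)%N -> (\prod_(f <- s) f)`_j = 0.
Proof.
elim: s => [|g t IH] hs.
  by rewrite !big_nil; split => //; exact: goodat1.
have [ga aK] := hs g (mem_head _ _).
have [gP vP] : goodat (\sum_(f <- t) ordf f)%N (\prod_(f <- t) f) /\
  forall j, (j + K < \sum_(f <- t) ordf f)%N -> (\prod_(f <- t) f)`_j = 0.
  by apply: IH => f hf; apply: hs; rewrite inE hf orbT.
rewrite !big_cons.
set a := ordf g in ga aK *; set B := (\sum_(f <- t) ordf f)%N in gP vP *.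
set P := \prod_(f <- t) f in gP vP *.
have mpQ := mp_rest gP; have mpp := mp_rest ga.
split.
  split.
    rewrite (mul_decomp _ ga gP) eqxx ltnNge leq_addr /= coef_rest addKn eqxx mulr0 addr0.
    rewrite ltnNge leq_addl /= addnK coef_rest eqxx mulr0 addr0.
    by rewrite unitrM; case: ga => -> _; case: gP => -> _.
  move=> i hi; rewrite (mul_decomp _ ga gP) (negbTE hi) add0r.
  apply: maxD; (case: ifP => _; [apply: max0 | apply: maxMl]).
    exact: mpQ.
  exact: mpp.
move=> j hj; rewrite (mul_decomp _ ga gP).
have -> : (j == a + B)%N = false by apply/negbTE; move: hj; apply: contraTN => /eqP ->; lia.
rewrite add0r.
have -> : (j < B)%N by lia.
rewrite addr0; case: ifP => // hja.
rewrite coef_rest.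
have -> : ((j - a)%N == B) = false by apply/negbTE; move: hj; apply: contraTN => /eqP; lia.
by rewrite vP ?mulr0 //; lia.
Qed.


Lemma goodXn n : goodat n ('X^n : {poly R}).
Proof.
split; first by rewrite coefXn eqxx unitr1.
by move=> i hi; rewrite coefXn (negbTE hi); apply: max0.
Qed.

Lemma unit_mul0 (u x : R) : u \is a GRing.unit -> u * x = 0 -> x = 0.
Proof. by move=> hu h; rewrite -(mulKr hu x) h mulr0. Qed.

Lemma unique_max (s : seq {poly R}) n f :
  \prod_(g <- s) g = 'X^n -> (forall g, g \in s -> poly_irr g) ->
  f \in s -> (2 <= ordf f)%N -> (forall g, g \in rem f s -> (ordf g < ordf f)%N) ->
  False.
Proof.
move=> hp hirr fs f2 hlt.
have [hg hsum] := prod_good hp (goodXn n).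
set M := ordf f in f2 hlt.
have gf : goodat M f by apply: hg.
have hcond : forall g, g \in rem f s -> goodat (ordf g) g /\ (ordf g <= M.-1)%N.
  move=> g hgs; split; first by apply: hg; apply: (mem_rem hgs).
  by have := hlt _ hgs; lia.
have [gP vP] := prod_coef hcond.
have := hsum; rewrite (big_rem _ fs) /= -/M => hsum'.
move: hp; rewrite (big_rem _ fs) /= => hp.
set B := (\sum_(g <- rem f s) ordf g)%N in gP vP hsum'.
set P := \prod_(g <- rem f s) g in gP vP hp.
have := f_equal (fun q : {poly R} => q`_B) hp => /=.
rewrite (mul_decomp _ gf gP) coefXn.
have -> : (B == n) = false by apply/negbTE; apply/eqP; lia.
have -> : (B == M + B)%N = false by apply/negbTE; apply/eqP; lia.
rewrite add0r ltnn subnn (coef_rest M f 0).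
have -> : (0 == M) = false by apply/negbTE; apply/eqP; lia.
case: ifP => hBM.
  rewrite add0r => /(unit_mul0 (proj1 gP)) /eqP.
  by apply/negP; exact: (irr_f0 (hirr f fs) gf f2).
rewrite coef_rest.
have -> : ((B - M)%N == B) = false by apply/negbTE; apply/eqP; lia.
rewrite vP; last by lia.
rewrite mulr0 add0r => /(unit_mul0 (proj1 gP)) /eqP.
by apply/negP; exact: (irr_f0 (hirr f fs) gf f2).
Qed.

Section Two.
Variable e : R.
Hypothesis he0 : e != 0.
Hypothesis hee : forall x, in_max x -> x = 0 \/ x = e.
Hypothesis hue : forall u, u \is a GRing.unit -> u * e = e.
Hypothesis hem : in_max e.

Lemma prod_cnt K (s : seq {poly R}) j : (1 <= K)%N ->
  (forall f, f \in s -> [/\ goodat (ordf f) f, (ordf f <= K)%N & (ordf f = K -> f`_0 = e)]) ->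
  (j + K = \sum_(f <- s) ordf f)%N ->
  (\prod_(f <- s) f)`_j = e *+ count (fun f => ordf f == K) s.
Proof.
move=> K1; elim: s j => [|g t IH] j hs.
  by rewrite big_nil; lia.
have [ga aK a0] := hs g (mem_head _ _).
have ht : forall f, f \in t -> [/\ goodat (ordf f) f, (ordf f <= K)%N & (ordf f = K -> f`_0 = e)].
  by move=> f hf; apply: hs; rewrite inE hf orbT.
have hcond : forall f, f \in t -> goodat (ordf f) f /\ (ordf f <= K)%N.
  by move=> f hf; have [x y _] := ht f hf.
have [gP _] := prod_coef hcond.
rewrite !big_cons /= => hj.
set a := ordf g in ga aK a0 hj *; set B := (\sum_(f <- t) ordf f)%N in gP hj IH *.
rewrite (mul_decomp _ ga gP).
have -> : (j == a + B)%N = false by apply/negbTE; apply/eqP; lia.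
rewrite add0r.
have cnt0 : (B < K)%N -> count (fun f => ordf f == K) t = 0%N.
  move=> hB; apply/eqP; rewrite -leqn0 leqNgt -has_count; apply/negP => /hasP [f hf /eqP hfK].
  have : (ordf f <= B)%N.
    by rewrite /B (big_rem _ hf) /=; apply: leq_addr.
  lia.
case: ifP => hja.
  rewrite add0r cnt0; last by lia.
  case: ifP => hjB.
    have -> : (a == K) = false by apply/negbTE; apply/eqP; lia.
    by [].
  rewrite coef_rest.
  have ea : a = K by lia.
  have -> : ((j - B)%N == a) = false by apply/negbTE; apply/eqP; lia.
  have -> : (j - B)%N = 0%N by lia.
  by rewrite a0 // hue; [rewrite ea eqxx | case: gP].
rewrite coef_rest.
have -> : ((j - a)%N == B) = false by apply/negbTE; apply/eqP; lia.
rewrite IH //; last by lia.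
rewrite mulrnAr hue; last by case: ga.
case: ifP => hjB.
  have -> : (a == K) = false by apply/negbTE; apply/eqP; lia.
  by rewrite addr0.
rewrite coef_rest.
have ea : a = K by lia.
have -> : ((j - B)%N == a) = false by apply/negbTE; apply/eqP; lia.
have -> : (j - B)%N = 0%N by lia.
rewrite a0 // hue; last by case: gP.
by rewrite ea eqxx mulrS addrC.
Qed.


Lemma ee0 : e + e = 0.
Proof.
case: (hee (maxD hem hem)) => // h.
have := addrK e e; rewrite h subrr => E.
by move: he0; rewrite -E eqxx.
Qed.

Lemma emuln c : e *+ c = if odd c then e else 0.
Proof.
elim: c => [|c IH] //=; rewrite mulrS IH; case: (odd c) => /=.
  by rewrite ee0.
by rewrite addr0.
Qed.

Lemma odd_max (s : seq {poly R}) n K :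
  \prod_(g <- s) g = 'X^n -> (forall g, g \in s -> poly_irr g) -> (2 <= K)%N ->
  (forall g, g \in s -> (ordf g <= K)%N) -> odd (count (fun f => ordf f == K) s) -> False.
Proof.
move=> hp hirr K2 hK hodd.
have [hg hsum] := prod_good hp (goodXn n).
have : has (fun f => ordf f == K) s by rewrite has_count; case: count hodd.
move=> /hasP [f fs /eqP fK].
have Kn : (K <= n)%N by rewrite -hsum -fK (big_rem _ fs) /= leq_addr.
have hc : forall f, f \in s -> [/\ goodat (ordf f) f, (ordf f <= K)%N & (ordf f = K -> f`_0 = e)].
  move=> g gs; split; [exact: hg | exact: hK |] => gK.
  have g0 : g`_0 != 0 by apply: (irr_f0 (hirr g gs) (hg g gs)); rewrite gK.
  case: (hg g gs) => _ /(_ 0%N) h.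
  have : in_max g`_0 by apply: h; rewrite gK; apply/eqP; lia.
  by case/hee => // h0; move: g0; rewrite h0 eqxx.
have := prod_cnt (j := (n - K)%N) (ltnW K2) hc.
rewrite hsum subnK // hp coefXn emuln hodd.
have -> : ((n - K)%N == n) = false by apply/negbTE; apply/eqP; lia.
by move=> /(_ erefl) /eqP; rewrite eq_sym (negbTE he0).
Qed.

End Two.


Lemma good_Xp a (p : {poly R}) : mp p -> goodat a ('X^a + p).
Proof.
move=> hp; split.
  by rewrite coefD coefXn eqxx; apply: unitD; [apply: unitr1 | apply: hp].
by move=> i hi; rewrite coefD coefXn (negbTE hi) add0r; apply: hp.
Qed.

Lemma irr_Xp a (p : {poly R}) : mp p -> (0 < a)%N -> (a = 1%N \/ p`_0 != 0) ->
  poly_irr ('X^a + p).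
Proof.
move=> hp ha h; apply: (irr_good (good_Xp a hp)) => //.
case: h => [->|h]; first by left.
right; rewrite coefD coefXn.
have -> : (0%N == a) = false by apply/negbTE; apply/eqP; lia.
by rewrite add0r.
Qed.

Lemma irrX : poly_irr ('X : {poly R}).
Proof. by apply: (irr_good goodX) => //; left. Qed.

Lemma prod_nseqX k : \prod_(g <- nseq k ('X : {poly R})) g = 'X^k.
Proof. by elim: k => [|k IH]; rewrite ?big_nil ?expr0 // big_cons IH exprS. Qed.

Lemma mk_len (s1 : seq {poly R}) d n k :
  (forall g, g \in s1 -> poly_irr g) -> \prod_(g <- s1) g = 'X^d -> (d <= n)%N ->
  k = (size s1 + (n - d))%N -> (0 < k)%N -> is_length ('X^n : {poly R}) k.
Proof.
move=> hirr hp dn hk k0; split => //.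
exists (s1 ++ nseq (n - d) 'X); split; last split.
- by rewrite size_cat size_nseq.
- move=> g; rewrite mem_cat => /orP [|]; first exact: hirr.
  by rewrite mem_nseq => /andP [_ /eqP ->]; apply: irrX.
- by rewrite big_cat /= hp prod_nseqX -exprD subnKC.
Qed.

Section Constr.
Variable e : R.
Hypothesis he0 : e != 0.
Hypothesis hem : in_max e.

Lemma len_pair n a : (2 <= a)%N -> (2 * a <= n)%N ->
  is_length ('X^n : {poly R}) (2 + (n - 2 * a))%N.
Proof.
move=> a2 an.
have mE : mp e%:P by apply: mpC.
apply: (mk_len (s1 := [:: 'X^a + e%:P; 'X^a - e%:P]) (d := (2 * a)%N)) => //.
- move=> g; rewrite !inE => /orP [] /eqP ->; apply: irr_Xp; try lia.
  + by apply: mpC.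
  + by right; rewrite coefC.
  + by apply: mpN.
  + by right; rewrite coefN coefC eqxx oppr_eq0.
- rewrite big_cons big_cons big_nil mulr1.
  have E : ('X^a + e%:P) * ('X^a - e%:P) = 'X^a * 'X^a - e%:P * e%:P by ring.
  by rewrite E (mp_mul0 mE mE) subr0 -exprD; congr ('X^_); lia.
Qed.

Lemma len_gadget n N : (1 <= N)%N -> (2 * N + 6 <= n)%N ->
  is_length ('X^n : {poly R}) (3 + (n - (2 * N + 6)))%N.
Proof.
move=> N1 hn.
have mE : mp e%:P by apply: mpC.
apply: (mk_len (s1 := [:: 'X^(N + 2) + (e%:P - e%:P * 'X^N); 'X^(N + 2) - e%:P; 'X^2 + e%:P])
          (d := (2 * N + 6)%N)) => //.
- move=> g; rewrite !inE => /orP [/eqP ->|/orP [] /eqP ->]; apply: irr_Xp; try lia.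
  + by apply: mpB => //; rewrite mulrC; apply: mpMl.
  + right; rewrite coefB coefC coefCM coefXn.
    have -> : (0%N == N) = false by apply/negbTE; apply/eqP; lia.
    by rewrite mulr0 subr0.
  + by apply: mpN.
  + by right; rewrite coefN coefC eqxx oppr_eq0.
  + exact: mE.
  + by right; rewrite coefC.
- rewrite !big_cons big_nil mulr1.
  have E1 : forall t : {poly R}, ('X^2 * t + (e%:P - e%:P * t)) * (('X^2 * t - e%:P) * ('X^2 + e%:P))
      = 'X^6 * t * t - (e%:P * e%:P) * ('X^2 * t * t + (1 - t) * ('X^2 + e%:P)).
    by move=> t; ring.
  rewrite (addnC N 2) (exprD _ 2 N) E1 (mp_mul0 mE mE) mul0r subr0 -!exprD; congr ('X^_); lia.
Qed.

Lemma len_triple n (x y : R) : in_max x -> in_max y -> x != 0 -> y != 0 -> x + y != 0 ->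
  (6 <= n)%N -> is_length ('X^n : {poly R}) (3 + (n - 6))%N.
Proof.
move=> mx my x0 y0 xy0 hn.
have mX : mp x%:P by apply: mpC.
have mY : mp y%:P by apply: mpC.
apply: (mk_len (s1 := [:: 'X^2 + x%:P; 'X^2 + y%:P; 'X^2 - (x%:P + y%:P)]) (d := 6%N)) => //.
- move=> g; rewrite !inE => /orP [/eqP ->|/orP [] /eqP ->]; apply: irr_Xp => //.
  + by right; rewrite coefC.
  + by right; rewrite coefC.
  + by apply: mpN; apply: mpD.
  + by right; rewrite coefN coefD !coefC eqxx oppr_eq0.
- rewrite !big_cons big_nil mulr1.
  have E1 : ('X^2 + x%:P) * (('X^2 + y%:P) * ('X^2 - (x%:P + y%:P)))
     = 'X^6 - 'X^2 * (x%:P * x%:P + x%:P * y%:P + y%:P * y%:P)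
       - x%:P * y%:P * (x%:P + y%:P) by ring.
  by rewrite E1 (mp_mul0 mX mX) (mp_mul0 mX mY) (mp_mul0 mY mY) !addr0 mulr0 !subr0 mul0r subr0.
Qed.

End Constr.


Lemma unit1m (x : R) : in_max x -> (1 + x) \is a GRing.unit.
Proof. by move=> hx; apply: unitD => //; apply: unitr1. Qed.

Lemma small_all (a : R) : a != 0 -> in_max a -> (forall x, in_max x -> x = 0 \/ x = a) ->
  forall r : R, r \in [:: 0; a; 1; 1 + a].
Proof.
move=> a0 am hm r; rewrite !inE.
case hr: (r \is a GRing.unit); last first.
  by case: (hm r); [rewrite /in_max hr | move=> ->; rewrite eqxx | move=> ->; rewrite eqxx orbT].
have ra : r * a = a.
  case: (hm (r * a)); [exact: maxMl | | by []].
  by move/(unit_mul0 hr) => a00; move: a0; rewrite a00 eqxx.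
have r1 : in_max (r - 1).
  rewrite /in_max; apply/negP => hu.
  have : (r - 1) * a = 0 by rewrite mulrBl ra mul1r subrr.
  by move/(unit_mul0 hu) => a00; move: a0; rewrite a00 eqxx.
case: (hm _ r1) => /eqP; rewrite subr_eq => /eqP ->.
  by rewrite add0r eqxx !orbT.
by rewrite addrC eqxx !orbT.
Qed.


Lemma nu' (y u : R) : in_max y -> u \is a GRing.unit -> (y == u) = false.
Proof. by move=> hy hu; apply/negP => /eqP e; move: hy; rewrite /in_max e hu. Qed.

Lemma card4_struct : (exists a : R, in_max a /\ a != 0) -> card_eq4 R ->
  exists e : R, [/\ e != 0, in_max e, (forall x, in_max x -> x = 0 \/ x = e) &
                 (forall u, u \is a GRing.unit -> u * e = e)].
Proof.
move=> [a [am a0]] [s [us [ss alls]]].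
have hm : forall x, in_max x -> x = 0 \/ x = a.
  move=> x xm; case: (eqVneq x 0) => [->|x0]; first by left.
  case: (eqVneq x a) => [->|xa]; first by right.
  exfalso.
  pose L : seq R := [:: 0; a; x; 1; 1 + a; 1 + x].
  have : (size L <= size s)%N.
    apply: uniq_leq_size; last by move=> y _; exact: alls.
    rewrite /L /= !inE !negb_or.
    have u1 := unitr1 R; have ua := unit1m am; have ux := unit1m xm.
    have m0 := max0.
    rewrite (nu' m0 u1) (nu' m0 ua) (nu' m0 ux) (nu' am u1) (nu' am ua) (nu' am ux).
    rewrite (nu' xm u1) (nu' xm ua) (nu' xm ux).
    have -> : (0 == a) = false by rewrite eq_sym (negbTE a0).
    have -> : (0 == x) = false by rewrite eq_sym (negbTE x0).
    have -> : (a == x) = false by rewrite eq_sym (negbTE xa).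
    have -> : (1 == 1 + a) = false by rewrite -{1}(addr0 1) (inj_eq (addrI 1)) eq_sym (negbTE a0).
    have -> : (1 == 1 + x) = false by rewrite -{1}(addr0 1) (inj_eq (addrI 1)) eq_sym (negbTE x0).
    have -> : (1 + a == 1 + x) = false by rewrite (inj_eq (addrI 1)) eq_sym (negbTE xa).
    by [].
  by rewrite ss.
exists a; split => // u hu.
case: (hm (u * a)); [exact: maxMl | | by []].
by move/(unit_mul0 hu) => a00; move: a0; rewrite a00 eqxx.
Qed.

Lemma gt4_pair : (exists a : R, in_max a /\ a != 0) -> card_gt4 R ->
  exists x y : R, [/\ in_max x, in_max y, x != 0, y != 0 & x + y != 0].
Proof.
move=> [a [am a0]] [s [us ss]].
case: (eqVneq (a + a) 0) => aa; last by exists a, a; split.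
case: (Classical_Prop.classic (exists x, in_max x /\ x != 0 /\ x != a)).
  move=> [x [xm [x0 xa]]]; exists a, x; split => //.
  apply/negP; rewrite addr_eq0 => /eqP h; move/negP: xa; apply; apply/eqP.
  move/eqP: aa; rewrite addr_eq0 => /eqP; rewrite {1}h => /oppr_inj.
  done.
move=> nex.
have hm : forall x, in_max x -> x = 0 \/ x = a.
  move=> x xm; case: (eqVneq x 0) => [->|x0]; first by left.
  case: (eqVneq x a) => [->|xa]; first by right.
  by exfalso; apply: nex; exists x.
have := small_all a0 am hm => hall.
pose L : seq R := [:: 0; a; 1; 1 + a].
have : (size s <= size L)%N.
  by apply: uniq_leq_size => // y _; apply: hall.
by rewrite ss.
Qed.


Lemma sum_ge (s : seq {poly R}) c : (forall f, f \in s -> (c <= ordf f)%N) ->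
  (size s * c <= \sum_(f <- s) ordf f)%N.
Proof.
elim: s => [|g t IH] h; first by rewrite big_nil.
rewrite big_cons /= mulSn; apply: leq_add; first by apply: h; apply: mem_head.
by apply: IH => f hf; apply: h; rewrite inE hf orbT.
Qed.

Lemma sum_le (s : seq {poly R}) c : (forall f, f \in s -> (ordf f <= c)%N) ->
  (\sum_(f <- s) ordf f <= size s * c)%N.
Proof.
elim: s => [|g t IH] h; first by rewrite big_nil.
rewrite big_cons /= mulSn; apply: leq_add; first by apply: h; apply: mem_head.
by apply: IH => f hf; apply: h; rewrite inE hf orbT.
Qed.

Lemma sum_cnt2 (s : seq {poly R}) : (forall f, f \in s -> (1 <= ordf f <= 2)%N) ->
  (\sum_(f <- s) ordf f = size s + count (fun f => ordf f == 2%N) s)%N.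
Proof.
elim: s => [|g t IH] h; first by rewrite big_nil.
rewrite big_cons /= IH; last by move=> f hf; apply: h; rewrite inE hf orbT.
have := h g (mem_head _ _); case: (ordf g) => [|[|[|x]]] //= _; lia.
Qed.

Lemma UM (s : seq {poly R}) n f :
  \prod_(g <- s) g = 'X^n -> (forall g, g \in s -> poly_irr g) ->
  f \in s -> (2 <= ordf f)%N -> (n + 2 < 2 * ordf f + size s)%N -> False.
Proof.
move=> hp hirr fs f2 hc.
have [hg hsum] := prod_good hp (goodXn n).
have pos : forall g, g \in s -> (1 <= ordf g)%N.
  by move=> g gs; apply: (irr_pos (hirr g gs) (hg g gs)).
apply: (unique_max hp hirr fs f2) => g grs.
have gs : g \in s by apply: (mem_rem grs).
have h1 : (\sum_(x <- s) ordf x = ordf f + \sum_(x <- rem f s) ordf x)%N by rewrite (big_rem _ fs).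
have h2 : (\sum_(x <- rem f s) ordf x = ordf g + \sum_(x <- rem g (rem f s)) ordf x)%N
  by rewrite (big_rem _ grs).
have h3 : (size (rem g (rem f s)) * 1 <= \sum_(x <- rem g (rem f s)) ordf x)%N.
  by apply: sum_ge => x /mem_rem /mem_rem xs; apply: pos.
rewrite (size_rem grs) (size_rem fs) in h3.
move: hsum hc h3; rewrite h1 h2 => hsum hc h3.
have : (0 < size (rem f s))%N by case: (rem f s) grs.
set S := (\sum_(x <- rem g (rem f s)) ordf x)%N in hsum h3.
have h3' : ((size s).-2 <= S)%N by move: h3; rewrite muln1.
have h4 : (0 < (size s).-1)%N -> True by [].
clearbody S; rewrite (size_rem fs) => hz; clear h3; move: hz h3'.
case: (size s) hc => [|[|z]] //=; lia.
Qed.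

Lemma nec (s : seq {poly R}) n :
  (7 <= n)%N -> \prod_(g <- s) g = 'X^n -> (forall g, g \in s -> poly_irr g) ->
  [/\ (size s <= n)%N, size s <> 1%N, size s <> n.-1 & (odd n -> size s <> 2%N)].
Proof.
move=> n7 hp hirr.
have [hg hsum] := prod_good hp (goodXn n).
have pos : forall g, g \in s -> (1 <= ordf g)%N.
  by move=> g gs; apply: (irr_pos (hirr g gs) (hg g gs)).
have hsz : (size s <= n)%N by have := sum_ge pos; rewrite hsum muln1.
split => //.
- case: s hp hirr hg hsum pos {hsz} => [|f [|]] //= hp hirr hg hsum pos _.
  rewrite big_cons big_nil addn0 in hsum.
  apply: (UM hp hirr (mem_head _ _)); rewrite hsum /=; lia.
- move=> hk.
  case hh: (has (fun f => 2 <= ordf f)%N s).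
    move/hasP: hh => [f fs f2]; apply: (UM hp hirr fs f2); lia.
  have : (\sum_(f <- s) ordf f <= size s * 1)%N.
    apply: sum_le => f fs; move/hasPn: hh => /(_ f fs); lia.
  lia.
- move=> on hk.
  case: s hp hirr hg hsum pos {hsz} hk => [|f [|g [|]]] //= hp hirr hg hsum pos _.
  rewrite big_cons big_cons big_nil addn0 in hsum.
  have hne : ordf f != ordf g.
    apply/negP => /eqP e; move: on; rewrite -hsum e addnn odd_double //.
  case: (leqP (ordf g) (ordf f)) => hfg.
    apply: (UM hp hirr (mem_head _ _)) => /=; [|]; move: hne => /eqP; lia.
  apply: (UM hp hirr (f := g)) => /=; [by rewrite !inE eqxx orbT| |]; move: hne => /eqP; lia.
Qed.


Lemma nec4 (e : R) (s : seq {poly R}) n :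
  e != 0 -> (forall x, in_max x -> x = 0 \/ x = e) ->
  (forall u, u \is a GRing.unit -> u * e = e) -> in_max e ->
  (7 <= n)%N -> \prod_(g <- s) g = 'X^n -> (forall g, g \in s -> poly_irr g) ->
  size s <> (n - 3)%N.
Proof.
move=> he0 hee hue hem n7 hp hirr hk.
have [hg hsum] := prod_good hp (goodXn n).
have pos : forall g, g \in s -> (1 <= ordf g)%N.
  by move=> g gs; apply: (irr_pos (hirr g gs) (hg g gs)).
case hh: (has (fun f => 3 <= ordf f)%N s).
  move/hasP: hh => [f fs f3]; apply: (UM hp hirr fs) => //; lia.
have h12 : forall f, f \in s -> (1 <= ordf f <= 2)%N.
  by move=> f fs; move/hasPn: hh => /(_ f fs); have := pos f fs; lia.
have := sum_cnt2 h12; rewrite hsum hk => hc.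
apply: (odd_max he0 hee hue hem hp hirr (K := 2%N)) => //.
  by move=> f fs; have := h12 f fs; lia.
have -> : count (fun f => ordf f == 2%N) s = 3%N by lia.
by [].
Qed.

End Basic.

Unset Implicit Arguments.
Theorem theorem4p14 (R : comUnitRingType) (n : nat) :
  artinian R -> local_ring R ->
  (exists a : R, in_max a /\ a != 0) ->
  (forall a b : R, in_max a -> in_max b -> a * b = 0) ->
  (7 <= n)%N ->
  (card_gt4 R ->
     forall k : nat, is_length ('X^n : {poly R}) k <->
       (if odd n then ((3 <= k <= n - 2)%N \/ k = n)
        else ((2 <= k <= n - 2)%N \/ k = n))) /\
  (card_eq4 R ->
     forall k : nat, is_length ('X^n : {poly R}) k <->
       (if odd n then ((3 <= k <= n - 4)%N \/ k = (n - 2)%N \/ k = n)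
        else ((2 <= k <= n - 4)%N \/ k = (n - 2)%N \/ k = n))).
Proof.
move=> _ Hloc Hex Hm2 n7.
have Hex' := Hex; case: Hex' => [e [em e0]].
have hn := odd_double_half n.
have SN : is_length ('X^n : {poly R}) n.
  apply: (mk_len Hloc Hm2 (s1 := [::]) (d := 0%N)) => //.
  - by rewrite big_nil expr0.
  - by rewrite subn0.
  - lia.
have SP : forall k, (2 <= k <= n - 2)%N -> odd n = odd k -> is_length ('X^n : {poly R}) k.
  move=> k hk hpar; have hk2 := odd_double_half k.
  have := len_pair Hloc Hm2 e0 em (n := n) (a := (n./2 - k./2 + 1)%N).
  have -> : (2 + (n - 2 * (n./2 - k./2 + 1)))%N = k.
    by move: hn hk2 hpar; case: (odd n); case: (odd k) => //= hn' hk2' _; lia.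
  apply; move: hn hk2 hpar; case: (odd n); case: (odd k) => //= hn' hk2' _; lia.
have SG : forall k, (3 <= k <= n - 5)%N -> odd n != odd k -> is_length ('X^n : {poly R}) k.
  move=> k hk hpar; have hk2 := odd_double_half k.
  have hN : exists N, (n - k = 2 * N + 5)%N.
    exists ((n - k - 5)./2); move: hn hk2 hpar; case: (odd n); case: (odd k) => //= hn' hk2' _; lia.
  case: hN => N hN.
  have := len_gadget Hloc Hm2 e0 em (n := n) (N := N.+1).
  have -> : (3 + (n - (2 * N.+1 + 6)))%N = k by lia.
  by apply; lia.
have nec' := nec Hloc Hm2.
split.
- move=> g4 k; split.
  + move=> [k0 [s [sz [irr pr]]]].
    have [h1 h2 h3 h4] := nec' s n n7 pr irr.
    rewrite sz in h1 h2 h3 h4.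
    by case: (odd n) h4 => h4; [have := h4 erefl|]; lia.
  + have [x [y [xm ym x0 y0 xy0]]] := gt4_pair Hex g4.
    have ST : is_length ('X^n : {poly R}) (n - 3)%N.
      have := len_triple Hloc Hm2 xm ym x0 y0 xy0 (n := n).
      have -> : (3 + (n - 6))%N = (n - 3)%N by lia.
      by apply; lia.
    have hk2 := odd_double_half k.
    move=> hk; case: (eqVneq k n) => [->|kn] //.
    case: (eqVneq k (n - 3)%N) => [->|kn3] //.
    case hp: (odd n == odd k).
      apply: SP; last by apply/eqP.
      by move: hk; case: (odd n) => -[] //; lia.
    apply: SG; last by rewrite hp.
    move: hk hn hk2 hp kn kn3; case: (odd n); case: (odd k) => //= -[] // hk hn' hk2' _ /eqP kn /eqP kn3; lia.
- move=> c4 k.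
  have [f [f0 fm hee hue]] := card4_struct Hloc Hex c4.
  split.
  + move=> [k0 [s [sz [irr pr]]]].
    have [h1 h2 h3 h4] := nec' s n n7 pr irr.
    have h5 := nec4 Hloc Hm2 f0 hee hue fm n7 pr irr.
    rewrite sz in h1 h2 h3 h4 h5.
    by case: (odd n) h4 => h4; [have := h4 erefl|]; lia.
  + have hk2 := odd_double_half k.
    move=> hk; case: (eqVneq k n) => [->|kn] //.
    case hp: (odd n == odd k).
      apply: SP; last by apply/eqP.
      by move: hk; case: (odd n) => -[|[]] //; lia.
    apply: SG; last by rewrite hp.
    move: hk hn hk2 hp kn; case: (odd n); case: (odd k) => //= -[|[]] // hk hn' hk2' _ /eqP kn; lia.
Qed.
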